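(* For every integer $n\ge r+1$, $c_n(\alpha,\alpha^2,0)=0$ (i.e. the polynomial $c_n(\alpha,\beta,0)$ vanishes when $\beta=\alpha^2$).
   Context: Fix an integer $r\ge1$ and indeterminates $\alpha,\beta,\gamma$. Define polynomials $c_n=c_n(\alpha,\beta,\gamma)\in\mathbb{Q}[\alpha,\beta,\gamma]$ by $c_n=0$ for $n<0$, $c_0=1$, and for every integer $n\ge-3$, $$(n+4)c_{n+4}+(2n+6-r)\alpha c_{n+3}+\left[(n+2-r)\alpha^2+(2n+5-2r)\frac{\alpha^2-\beta}{4}\right]c_{n+2}+\left[(2n+3-3r)\alpha\frac{\alpha^2-\beta}{4}+\frac{\gamma}{2}\right]c_{n+1}+\frac{1}{16}(\alpha^2-\beta)^2(n+1-2r)c_n=0.$$ *)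

(* Defs.v *)
From HB Require Import structures.
From mathcomp Require Import all_boot all_order all_algebra.
From mathcomp Require Import mpoly.
Set Implicit Arguments. Unset Strict Implicit. Unset Printing Implicit Defensive.
Import Order.TTheory GRing.Theory Num.Theory.
Local Open Scope ring_scope.

Notation P3 := {mpoly rat[3]}.
Definition alpha : P3 := 'X_(0 : 'I_3).
Definition beta  : P3 := 'X_(1 : 'I_3).
Definition gamma : P3 := 'X_(2 : 'I_3).
Definition delta : P3 := (1 / 4 : rat) *: (alpha ^+ 2 - beta).

(* One step of the recurrence: given (c_{m-3}, c_{m-2}, c_{m-1}, c_m), with
   m >= 0, compute c_{m+1}.  Writing m+1 = n+4 (so n = m-3 >= -3 as an integer):
   (n+4) c_{n+4} = -[ (2n+6-r) a c_{n+3}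
                     + ((n+2-r) a^2 + (2n+5-2r) d) c_{n+2}
                     + ((2n+3-3r) a d + g/2) c_{n+1}
                     + (1/16)(a^2-b)^2 (n+1-2r) c_n ]. *)
Definition c_next (r m : nat) (c0 c1 c2 c3 : P3) : P3 :=
  let n : int := m%:Z - 3 in
  let rz : int := r%:Z in
  - (((m.+1)%:R : rat)^-1 *:
     ( ((2 * n + 6 - rz)%:~R : rat) *: (alpha * c3)
     + (((n + 2 - rz)%:~R : rat) *: alpha ^+ 2
        + ((2 * n + 5 - 2 * rz)%:~R : rat) *: delta) * c2
     + (((2 * n + 3 - 3 * rz)%:~R : rat) *: (alpha * delta)
        + (1 / 2 : rat) *: gamma) * c1
     + ((1 / 16 : rat) * (n + 1 - 2 * rz)%:~R) *: ((alpha ^+ 2 - beta) ^+ 2 * c0))).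

(* c_window r m = (c_{m-3}, c_{m-2}, c_{m-1}, c_m), with c_k = 0 for k < 0. *)
Fixpoint c_window (r m : nat) : P3 * P3 * P3 * P3 :=
  match m with
  | 0 => (0, 0, 0, 1)
  | m'.+1 =>
      let '(c0, c1, c2, c3) := c_window r m' in
      (c1, c2, c3, c_next r m' c0 c1 c2 c3)
  end.

Definition c (r n : nat) : P3 := (c_window r n).2.

Definition spec_beta_alpha2_gamma0 (p : P3) : P3 :=
  p \mPo [tuple alpha; alpha ^+ 2; 0].

(* Main.v *)
Require Import Defs.
From HB Require Import structures.
From mathcomp Require Import all_boot all_order all_algebra.
From mathcomp Require Import mpoly.
From mathcomp Require Import ring.
Local Open Scope ring_scope.
Import GRing.Theory Num.Theory.

Section S.
Variable r : nat.
Local Notation S := spec_beta_alpha2_gamma0.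

Lemma SD p q : S (p + q) = S p + S q. Proof. exact: comp_mpolyD. Qed.
Lemma SN p : S (- p) = - S p. Proof. exact: comp_mpolyN. Qed.
Lemma SB p q : S (p - q) = S p - S q. Proof. exact: comp_mpolyB. Qed.
Lemma SZ (k : rat) p : S (k *: p) = k *: S p. Proof. exact: comp_mpolyZ. Qed.
Lemma SM p q : S (p * q) = S p * S q.
Proof. exact: (rmorphM (comp_mpoly _)). Qed.
Lemma SX p k : S (p ^+ k) = S p ^+ k.
Proof. exact: (rmorphXn (comp_mpoly _)). Qed.
Lemma S0 : S 0 = 0. Proof. exact: comp_mpoly0. Qed.
Lemma S1 : S 1 = 1. Proof. exact: comp_mpoly1. Qed.
Lemma Sa : S alpha = alpha. Proof. by rewrite /S /alpha comp_mpolyXU. Qed.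
Lemma Sb : S beta = alpha ^+ 2. Proof. by rewrite /S /beta comp_mpolyXU. Qed.
Lemma Sg : S gamma = 0. Proof. by rewrite /S /gamma comp_mpolyXU. Qed.
Lemma Sd : S delta = 0.
Proof. by rewrite /delta SZ SB SX Sa Sb subrr scaler0. Qed.

Definition d (k : nat) : P3 := ('C(r, k)%:R : rat) *: alpha ^+ k.
Definition dd (k : nat) : P3 := if (k < 3)%N then 0 else d (k - 3).

Lemma scal_id (m : nat) (C C' Cm1 : rat) :
  (m.+1%:R * C' = (r%:R - m%:R) * C) ->
  (m%:R * C = (r%:R - m%:R + 1) * Cm1) ->
  - ((m.+1%:R : rat)^-1 * (((2 * (m%:Z - 3) + 6 - r%:Z)%:~R : rat) * C
       + (((m%:Z - 3) + 2 - r%:Z)%:~R : rat) * Cm1)) = C'.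
Proof.
move=> h1 h2.
have hm : (m.+1%:R : rat) != 0 by rewrite pnatr_eq0.
have -> : C' = (m.+1%:R)^-1 * ((r%:R - m%:R) * C).
  by rewrite -h1 mulrA mulVf // mul1r.
have -> : (((m%:Z - 3) + 2 - r%:Z)%:~R : rat) * Cm1 = - (m%:R * C).
  rewrite h2. rewrite !rmorphD !rmorphN /=. ring.
rewrite !rmorphD !rmorphN !rmorphM /=. ring.
Qed.

Lemma binL (m : nat) :
  (m.+1%:R * ('C(r, m.+1)%:R : rat) = (r%:R - m%:R) * 'C(r, m)%:R).
Proof.
case: (leqP m r) => hm.
  by rewrite -!natrM mul_bin_left natrM natrB.
by rewrite !bin_small ?mulr0 // ltnW.
Qed.

Lemma binR (m : nat) :
  (m.+1%:R * ('C(r, m.+1)%:R : rat) = (r%:R - m.+1%:R + 1) * 'C(r, m)%:R).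
Proof.
rewrite binL; congr (_ * _).
by rewrite -natr1 opprD addrA subrK.
Qed.

Lemma Snext (m : nat) c0 c1 c2 c3 :
  S c2 = dd m.+2 -> S c3 = d m ->
  S (c_next r m c0 c1 c2 c3) = d m.+1.
Proof.
move=> h2 h3; rewrite /c_next SN SZ !SD !SM !SZ !SD !SZ !SM !SB !SX Sb !Sa Sd Sg h2 h3 subrr.
rewrite ?(mulr0, scaler0, mul0r, add0r, addr0).
have key : forall Cm1 : rat, (m%:R * ('C(r, m)%:R : rat) = (r%:R - m%:R + 1) * Cm1) ->
  (((m%:Z - 3 + 2 - r%:Z)%:~R : rat) *: (alpha * alpha)) * dd m.+2
    = (((m%:Z - 3 + 2 - r%:Z)%:~R : rat) * Cm1) *: alpha ^+ m.+1 ->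
  - (m.+1%:R^-1 *:
   (((2 * (m%:Z - 3) + 6 - r%:Z)%:~R : rat) *: (alpha * d m) +
    ((m%:Z - 3 + 2 - r%:Z)%:~R : rat) *: (alpha * alpha) * dd m.+2)) = d m.+1.
  move=> Cm1 hb ->.
  rewrite /d -scalerAr -exprS scalerA -scalerDl scalerA -scaleNr.
  congr (_ *: _).
  by rewrite -(@scal_id m _ _ _ (binL m) hb).
case: m h2 h3 key => [|m] h2 h3 key.
  apply: (key 0); first by rewrite mul0r mulr0.
  by rewrite /dd /= !mulr0 scale0r.
apply: (key ('C(r, m)%:R)); first exact: binR.
rewrite /dd /= (_ : (m.+3 - 3)%N = m); last by rewrite -addn3 addnK.
rewrite /d -scalerAl -scalerAr scalerA -mulrA -!exprS.
by rewrite mulrC.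
Qed.

Lemma window_spec (m : nat) :
  let w := c_window r m in
  [/\ S w.1.1.1 = dd m, S w.1.1.2 = dd m.+1, S w.1.2 = dd m.+2 & S w.2 = d m].
Proof.
elim: m => [|m IH] /=.
  by rewrite S0 S1 /d bin0 expr0 scale1r.
move: IH; case: (c_window r m) => [[[c0 c1] c2] c3] /= [h0 h1 h2 h3].
split => //.
  by rewrite /dd /= (_ : (m.+3 - 3)%N = m) // -addn3 addnK.
exact: Snext.
Qed.

End S.

Theorem corollary3p5 (r : nat) : (1 <= r)%N ->
  forall n : nat, (r + 1 <= n)%N -> spec_beta_alpha2_gamma0 (c r n) = 0.
Proof.
move=> _ n hn; rewrite /c; have [_ _ _ ->] := window_spec r n.
by rewrite /d bin_small ?scale0r // -addn1.
Qed.
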